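(* Let $G_1$ and $G_2$ be two vertex-disjoint simple connected graphs with $|V(G_1)|=n_1$, $|V(G_2)|=n_2$, $|E(G_1)|=m_1$, $|E(G_2)|=m_2$. Then the vertex S-join $G_1\dot{\vee}_S G_2$ satisfies \[ F(G_1\dot{\vee}_S G_2)=F(G_1)+F(G_2)+3n_2M_1(G_1)+3n_1M_1(G_2)+6m_1n_2^{2}+6m_2n_1^{2}+n_1n_2(n_1^2+n_2^2)+8m_1 . \]
   Context: For a simple graph $G$ and $v\in V(G)$, $d_G(v)$ is the degree of $v$. The first Zagreb index is $M_1(G)=\sum_{v\in V(G)}d_G(v)^2$ and the F-index (forgotten topological index) is $F(G)=\sum_{v\in V(G)}d_G(v)^3$. The subdivision graph $S(G)$ is obtained from $G$ by inserting a new vertex into each edge of $G$ (replacing each edge by a path of length 2); let $I(G)$ denote the set of these inserted vertices, so $V(S(G))=V(G)\cup I(G)$. The vertex S-join $G_1\dot{\vee}_S G_2$ is the graph obtained from $S(G_1)$ and $G_2$ (taken vertex-disjoint) by joining each vertex of $V(G_1)$ to every vertex of $G_2$ by an edge. *)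

(* Defs.v *)
From mathcomp Require Import all_boot.
Set Implicit Arguments. Unset Strict Implicit. Unset Printing Implicit Defensive.

Section Graphs.
Variable T : finType.

Definition simple_graph (e : rel T) : Prop := symmetric e /\ irreflexive e.
Definition connected_graph (e : rel T) : Prop := forall x y : T, connect e x y.

Definition deg (e : rel T) (v : T) : nat := #|[set w | e v w]|.
Definition M1 (e : rel T) : nat := \sum_(v : T) deg e v ^ 2.
Definition Findex (e : rel T) : nat := \sum_(v : T) deg e v ^ 3.

Definition is_edge (e : rel T) (s : {set T}) : bool :=
  [exists x, exists y, e x y && (s == [set x; y])].
Definition edge_type (e : rel T) := {s : {set T} | is_edge e s}.
Definition nedges (e : rel T) : nat := #|[set s : {set T} | is_edge e s]|.
End Graphs.

(* Vertex type of the vertex S-join: V(G1) + I(G1) + V(G2), where I(G1)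
   has one inserted vertex per edge of G1 (the edge itself). *)
Definition SjoinV (V1 V2 : finType) (e1 : rel V1) : finType :=
  ((V1 + edge_type e1) + V2)%type.

Definition Sjoin_adj (V1 V2 : finType) (e1 : rel V1) (e2 : rel V2)
  (a b : SjoinV V2 e1) : bool :=
  match a, b with
  | inl (inl x), inl (inr s) => x \in val s       (* subdivision edges *)
  | inl (inr s), inl (inl x) => x \in val s
  | inl (inl x), inr _ => true
  | inr _, inl (inl x) => true
  | inr y, inr y' => e2 y y'
  | _, _ => false
  end.

Arguments Sjoin_adj {V1 V2} e1 e2 a b.

(* Main.v *)
Require Import Defs.
From mathcomp Require Import all_boot.
From mathcomp Require Import ring.

Lemma degE (T : finType) (e : rel T) v : deg e v = \sum_w (e v w : nat).
Proof.
rewrite /deg -sum1_card big_mkcond /=; apply: eq_bigr => w _.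
by rewrite inE; case: (e v w).
Qed.

Lemma set2_inj (T : finType) (x : T) : injective (fun y => [set x; y]).
Proof.
move=> y y' /= E.
have : y \in [set x; y'] by rewrite -E !inE eqxx orbT.
have : y' \in [set x; y] by rewrite E !inE eqxx orbT.
rewrite !inE => /orP[/eqP h1|/eqP h1] /orP[/eqP h2|/eqP h2] //; by subst.
Qed.

Lemma edges_at (T : finType) (e : rel T) x : simple_graph e ->
  #|[set s : {set T} | is_edge e s && (x \in s)]| = deg e x.
Proof.
move=> [sym irr].
have -> : [set s : {set T} | is_edge e s && (x \in s)] =
   (fun y => [set x; y]) @: [set y | e x y].
  apply/setP => s; rewrite !inE; apply/idP/idP.
  - case/andP => /existsP[a /existsP[b /andP[eab /eqP ->]]].
    rewrite !inE => /orP[/eqP xa|/eqP xb]; subst x.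
      by apply/imsetP; exists b; rewrite ?inE.
    apply/imsetP; exists a; first by rewrite inE sym.
    by apply/setP => z; rewrite !inE orbC.
  - case/imsetP => y; rewrite inE => exy ->.
    rewrite !inE eqxx andbT; apply/existsP; exists x; apply/existsP; exists y.
    by rewrite exy eqxx.
by rewrite card_imset //; apply: set2_inj.
Qed.

Lemma edge_card (T : finType) (e : rel T) (s : {set T}) : simple_graph e -> is_edge e s ->
  #|s| = 2.
Proof.
move=> [sym irr] /existsP[a /existsP[b /andP[eab /eqP ->]]].
rewrite cards2; case: eqP => // ab; by rewrite ab irr in eab.
Qed.

Lemma handshake (T : finType) (e : rel T) : simple_graph e ->
  \sum_x deg e x = 2 * nedges e.
Proof.
move=> sg.
transitivity (\sum_x \sum_(s : {set T} | is_edge e s) (x \in s : nat)).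
  apply: eq_bigr => x _; rewrite -(edges_at _ _ _ sg) -sum1_card big_mkcond /=.
  rewrite [RHS]big_mkcond /=; apply: eq_bigr => s _; rewrite inE.
  by case: (is_edge e s); case: (x \in s).
rewrite exchange_big /= /nedges -sum1_card big_distrr /=.
rewrite [RHS](eq_bigl (fun s => is_edge e s)); last by move=> s; rewrite inE.
apply: eq_big => // s E.
rewrite muln1 -(edge_card _ _ _ sg E) -sum1_card [RHS]big_mkcond /=.
by apply: eq_bigr => x _; case: (x \in s).
Qed.

Lemma cube_sum (T : finType) (d : T -> nat) n :
  \sum_x (d x + n) ^ 3 = \sum_x d x ^ 3 + 3 * n * \sum_x d x ^ 2
     + 3 * n ^ 2 * \sum_x d x + #|T| * n ^ 3.
Proof.
rewrite !big_distrr /= -sum_nat_const -!big_split /=.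
apply: eq_bigr => x _; ring.
Qed.

Theorem theorem1 (V1 V2 : finType) (e1 : rel V1) (e2 : rel V2) :
  simple_graph e1 -> simple_graph e2 ->
  connected_graph e1 -> connected_graph e2 ->
  let n1 := #|V1| in let n2 := #|V2| in
  let m1 := nedges e1 in let m2 := nedges e2 in
  Findex (Sjoin_adj e1 e2) =
    Findex e1 + Findex e2 + 3 * n2 * M1 e1 + 3 * n1 * M1 e2
    + 6 * m1 * n2 ^ 2 + 6 * m2 * n1 ^ 2 + n1 * n2 * (n1 ^ 2 + n2 ^ 2) + 8 * m1.
Proof.
move=> sg1 sg2 _ _ n1 n2 m1 m2.
have dx : forall x, deg (Sjoin_adj e1 e2) (inl (inl x)) = deg e1 x + n2.
  move=> x; rewrite degE !big_sumType /= big1 // add0n.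
  rewrite sum_nat_const muln1; congr (_ + _).
  transitivity #|[set i : edge_type e1 | x \in val i]|.
    rewrite -sum1_card [RHS]big_mkcond /=; apply: eq_big => // i _.
    by rewrite inE; case: (x \in val i).
  rewrite -(edges_at _ _ _ sg1) -(card_imset _ val_inj).
  apply: eq_card => s; rewrite [RHS]inE; apply/imsetP/andP.
  - case=> i; rewrite inE => xi ->; split => //; exact: valP.
  - case=> E xs; exists (exist _ s E) => //; by rewrite inE.
have ds : forall s : edge_type e1, deg (Sjoin_adj e1 e2) (inl (inr s)) = 2.
  move=> s; rewrite degE !big_sumType /=.
  rewrite [X in _ + X + _]big1 // [X in _ + X]big1 // !addn0.
  rewrite -(edge_card _ _ _ sg1 (valP s)) -sum1_card [RHS]big_mkcond /=.
  by apply: eq_bigr => x _; case: (x \in val s).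
have dy : forall y, deg (Sjoin_adj e1 e2) (inr y) = deg e2 y + n1.
  move=> y; rewrite degE !big_sumType /= [X in _ + X + _]big1 // addn0.
  by rewrite sum_nat_const muln1 addnC degE.
rewrite /Findex !big_sumType /=.
under eq_bigr do rewrite dx.
under [X in _ + X + _]eq_bigr do rewrite ds.
under [X in _ + X]eq_bigr do rewrite dy.
rewrite !cube_sum !handshake // sum_nat_const card_sig /M1 /Findex.
rewrite -/n1 -/n2 -/m1 -/m2.
have -> : #|[pred x | is_edge e1 x]| = m1 by rewrite /m1 /nedges cardsE.
ring.
Qed.
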